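(* Let $m>k>0$ and $n\ge1$ be integers with $\gcd(m,k)=1$. Then $$\frac{m^2n}{mnk+1}=[a_1,\dots,a_h]^-,$$ where the string $(a_1,\dots,a_h)$ is obtained from $(2,n+1,2)$ by a finite (possibly empty) sequence of operations, each of one of the following two types: (1) $(n_1,\dots,n_b)\mapsto(2,n_1,n_2,\dots,n_{b-1},n_b+1)$; (2) $(n_1,\dots,n_b)\mapsto(n_1+1,n_2,\dots,n_b,2)$.
   Context: For integers $b_i\ge2$, $$[b_1,\dots,b_k]^-=b_1-\cfrac{1}{b_2-\cfrac{1}{\ddots-\cfrac{1}{b_k}}}.$$ *)

(* Defs.v *)
From HB Require Import structures.
From mathcomp Require Import all_boot all_order all_algebra.
Set Implicit Arguments. Unset Strict Implicit. Unset Printing Implicit Defensive.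
Import Order.TTheory GRing.Theory Num.Theory.

(* Hirzebruch--Jung (negative) continued fraction
   [b_1,...,b_k]^- = b_1 - 1/(b_2 - 1/(... - 1/b_k)), computed in rat.
   The empty string is given the (irrelevant) value 0. *)
Fixpoint hjcf (s : seq nat) : rat :=
  match s with
  | [::] => 0%R
  | [:: b] => (b%:R)%R
  | b :: t => (b%:R - (hjcf t)^-1)%R
  end.

Definition op1 (s : seq nat) : seq nat :=
  match s with
  | [::] => [::]
  | x :: t => 2 :: rcons (belast x t) (last x t).+1
  end.

Definition op2 (s : seq nat) : seq nat :=
  match s with
  | [::] => [::]
  | x :: t => rcons (x.+1 :: t) 2
  end.

Inductive reachable (n : nat) : seq nat -> Prop :=
  | reach0 : reachable n [:: 2; n.+1; 2]
  | reach1 s : reachable n s -> reachable n (op1 s)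
  | reach2 s : reachable n s -> reachable n (op2 s).

(* Main.v *)
Require Import Defs.
From HB Require Import structures.
From mathcomp Require Import all_boot all_order all_algebra.
From Stdlib Require Import Ring.
Import Order.TTheory GRing.Theory Num.Theory.

Section Aux.
Local Open Scope ring_scope.
Definition radd (x y : rat) : rat := x + y.
Definition rmul (x y : rat) : rat := x * y.
Definition rsub (x y : rat) : rat := x - y.
Definition ropp (x : rat) : rat := - x.
Definition r0 : rat := 0.
Definition r1 : rat := 1.
Lemma rat_rt : ring_theory r0 r1 radd rmul rsub ropp (@eq rat).
Proof. split=> *; rewrite /radd/rmul/rsub/ropp/r0/r1; [exact: add0r|exact: addrC|exact: addrA|exact: mul1r|exact: mulrC|exact: mulrA|exact: mulrDl|done|exact: subrr]. Qed.
End Aux.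
Add Ring ratr : rat_rt.

Section Main.
Local Open Scope ring_scope.
Lemma addE (x y : rat) : x + y = radd x y. Proof. by []. Qed.
Lemma mulE (x y : rat) : x * y = rmul x y. Proof. by []. Qed.
Lemma oppE (x : rat) : - x = ropp x. Proof. by []. Qed.
Lemma zeroE : 0 = r0 :> rat. Proof. by []. Qed.
Lemma oneE : 1 = r1 :> rat. Proof. by []. Qed.
Definition nr (a : nat) : rat := a%:R.
Lemma natE a : a%:R = nr a :> rat. Proof. by []. Qed.
Lemma natSE a : (a.+1)%:R = nr a + 1 :> rat. Proof. by rewrite -natr1. Qed.
Lemma twoE : 2%:R = 1 + 1 :> rat. Proof. by []. Qed.
Ltac rring := match goal with |- ?a = ?b => change (@eq rat a b) end;
  rewrite ?natrD ?mulr1n ?twoE ?natSE ?natE ?addE ?mulE ?oppE ?zeroE ?oneE; ring.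

Record M4 := Mk { a11 : rat; a12 : rat; a21 : rat; a22 : rat }.

Fixpoint mat (s : seq nat) : M4 :=
  match s with
  | [::] => Mk 1 0 0 1
  | a :: t => let M := mat t in
      Mk (a%:R * a11 M - a21 M) (a%:R * a12 M - a22 M) (a11 M) (a12 M)
  end.

Definition mmul (M N : M4) : M4 :=
  Mk (a11 M * a11 N + a12 M * a21 N) (a11 M * a12 N + a12 M * a22 N)
     (a21 M * a11 N + a22 M * a21 N) (a21 M * a12 N + a22 M * a22 N).

Lemma mat_cat s t : mat (s ++ t) = mmul (mat s) (mat t).
Proof.
elim: s => [|a s IH] /=.
  by case: (mat t) => x y z w; rewrite /mmul /=; congr Mk; rring.
rewrite IH; case: (mat s) => x y z w; case: (mat t) => x' y' z' w'.
by rewrite /mmul /=; congr Mk; rring.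
Qed.

Lemma mat_rcons s y : mat (rcons s y) =
  mmul (mat s) (Mk y%:R (-1) 1 0).
Proof.
rewrite -cats1 mat_cat /=; congr mmul; congr Mk; rring.
Qed.

Lemma hjcf_cons a t : hjcf (a :: t) = a%:R - (hjcf t)^-1.
Proof. by case: t => [|b t] //=; rewrite invr0 subr0. Qed.

Lemma hjcf_mat {s} : all (leq 2) s ->
  [/\ 0 <= a21 (mat s), a21 (mat s) + 1 <= a11 (mat s)
    & hjcf s = a11 (mat s) / a21 (mat s)].
Proof.
elim: s => [|a t IH].
  by move=> _ /=; rewrite invr0 mulr0 add0r; split.
rewrite [all _ _]/=; case/andP=> a2 /IH [h1 h2 h3].
set x := a11 (mat t) in h2 h3 *; set y := a21 (mat t) in h1 h2 h3 *.
have x1 : 1 <= x by apply: le_trans h2; rewrite lerDr.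
have x0 : 0 < x by apply: lt_le_trans x1.
split.
- exact: ltW.
- rewrite -subr_ge0.
  have -> : a%:R * x - y - (x + 1) = (a%:R - (1 + 1)) * x + (x - (y + 1)) by clearbody x y; rring.
  apply: addr_ge0; last by rewrite subr_ge0.
  apply: mulr_ge0; last exact: ltW.
  by rewrite subr_ge0 -twoE ler_nat.
- rewrite hjcf_cons h3 invf_div mulrBl mulfK //; exact: lt0r_neq0.
Qed.

Lemma all_belast {x : nat} {t} : all (leq 2) (x :: t) ->
  all (leq 2) (belast x t) && (2 <= last x t)%N.
Proof. by rewrite lastI all_rcons andbC. Qed.

Lemma reach_all {n s} : (1 <= n)%N -> reachable n s -> all (leq 2) s /\ s <> [::].
Proof.
move=> n1; elim=> {s} [|s _ [A N]|s _ [A N]].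
- by split=> //=; rewrite ltnS n1.
- case: s A N => [|x t] // A _; split=> //=.
  rewrite all_rcons; case/andP: (all_belast A) => -> /= h.
  by rewrite andbT (leq_trans h).
- case: s A N => [|x t] // A _; split=> //=.
  rewrite all_rcons /=; case/andP: A => h A; rewrite (leq_trans h) //; exact: A.
Qed.

Definition T (n m k : rat) : M4 :=
  Mk (m * m * n) (- (m * n * (m - k) + 1)) (m * n * k + 1) (- (k * (m - k) * n + 1)).

Lemma op1_mat x t : mat (op1 (x :: t)) =
  mmul (mmul (Mk 2%:R (-1) 1 0) (mat (x :: t))) (Mk 1 0 (-1) 1).
Proof.
have -> : mat (x :: t) = mat (rcons (belast x t) (last x t)) by rewrite -lastI.
rewrite /op1 [mat (2 :: _)]/= !mat_rcons.
case: (mat (belast x t)) => p q r u; rewrite /mmul /=.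
congr Mk; rring.
Qed.

Lemma op2_mat x t : mat (op2 (x :: t)) =
  mmul (mmul (Mk 1 1 0 1) (mat (x :: t))) (Mk 2%:R (-1) 1 0).
Proof.
rewrite /op2 mat_rcons /= -natr1.
case: (mat t) => p q r u; rewrite /mmul /=.
congr Mk; rring.
Qed.

Lemma op1_T {n m k s} : s <> [::] -> mat s = T n m k ->
  mat (op1 s) = T n ((1 + 1) * m - k) m.
Proof.
case: s => [|x t] // _; rewrite op1_mat => ->.
rewrite /mmul /T /=; congr Mk; rring.
Qed.

Lemma op2_T {n m k s} : s <> [::] -> mat s = T n m k ->
  mat (op2 s) = T n (m + k) k.
Proof.
case: s => [|x t] // _; rewrite op2_mat => ->.
rewrite /mmul /T /=; congr Mk; rring.
Qed.

Lemma main {n m} : (1 <= n)%N -> forall k, (0 < k)%N -> (k < m)%N -> coprime m k ->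
  exists s, reachable n s /\ mat s = T n%:R m%:R k%:R.
Proof.
move=> n1; elim/ltn_ind: m => m IH k k0 km cop.
case: (ltngtP (k + k) m) => hk.
- have mk : (k <= m)%N by apply: ltnW.
  have [|||s [R E]] := IH (m - k)%N _ k k0.
  + by rewrite ltn_subrL k0 (leq_trans k0 (ltnW km)).
  + by rewrite ltn_subRL.
  + by rewrite /coprime gcdnC -(gcdnDl k) subnKC // gcdnC.
  exists (op2 s); split; first exact: reach2.
  rewrite (op2_T (proj2 (reach_all n1 R)) E) -natrD subnK //.
- have mk2 : (m <= k + k)%N by apply: ltnW.
  have [|||s [R E]] := IH k km (k + k - m)%N.
  + by rewrite subn_gt0.
  + by rewrite ltn_subLR // ltn_add2r.
  + have -> : (k + k - m = k - (m - k))%N.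
      by rewrite subnBA // ltnW.
    have hmk : (m - k <= k)%N by rewrite leq_subLR.
    have e1 : gcdn m k = gcdn (m - k) k.
      by rewrite -{1}(subnK (ltnW km)) gcdnC gcdnDr gcdnC.
    move: cop; rewrite /coprime e1.
    set j := (m - k)%N; set i := (k - j)%N.
    have ek : k = (i + j)%N by rewrite subnK.
    clearbody i j; subst k.
    by rewrite [gcdn (i + j) i]gcdnC gcdnDl gcdnDr gcdnC.
  exists (op1 s); split; first exact: reach1.
  rewrite (op1_T (proj2 (reach_all n1 R)) E); congr T.
  rewrite natrB // natrD; rring.
- have k1 : k = 1%N.
    by move: cop; rewrite -hk /coprime gcdnC gcdnDl gcdnn => /eqP.
  subst k; subst m.
  exists [:: 2%N; n.+1; 2%N]; split; first exact: reach0.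
  rewrite /= /T -natr1; congr Mk; rring.
Qed.
End Main.

Theorem lemma3p3 (m k n : nat) :
  (0 < k)%N -> (k < m)%N -> (1 <= n)%N -> coprime m k ->
  exists s : seq nat, reachable n s /\
    hjcf s = ((m ^ 2 * n)%:R / (m * n * k + 1)%:R)%R.
Proof.
move=> k0 km n1 cop.
have [s [R E]] := main n1 _ k0 km cop.
exists s; split=> //.
have [_ _ ->] := hjcf_mat (proj1 (reach_all n1 R)).
by rewrite E /T /= natrD !natrM.
Qed.
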